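(* Let $\mathbf{IL}\mathsf X$ be a Horn logic and $\Gamma$ a finite set of formulas. If a systematic $\mathbf{IL}\mathsf X$-tableau for $\Gamma$ closes (every branch contains some $\sigma::A$ and $\sigma::\neg A$), then $\Gamma$ is $\mathbf{IL}\mathsf X$-unsatisfiable, i.e. there is no $\mathbf{IL}\mathsf X$-model $M$ and world $x$ of $M$ with $M,x\Vdash A$ for all $A\in\Gamma$.
   Context: Formulas: built from a countable set $\mathsf{Prop}$ of propositional variables by $\neg$, $\to$, unary $\Box$ and binary $\rhd$. $\mathbf{IL}$ is the modal logic with axioms all instances of propositional tautologies and the schemes $\Box(A\to B)\to(\Box A\to\Box B)$, $\Box(\Box A\to A)\to\Box A$, $\Box(A\to B)\to A\rhd B$, $(A\rhd B)\wedge(B\rhd C)\to A\rhd C$, $(A\rhd C)\wedge(B\rhd C)\to A\vee B\rhd C$, $A\rhd B\to(\Diamond A\to\Diamond B)$, $\Diamond A\rhd A$ ($\Diamond=\neg\Box\neg$), rules modus ponens and necessitation. An $\mathbf{IL}$-frame is $\langle W,R,S\rangle$ with $W\neq\emptyset$, $R$ transitive and Noetherian (no infinite chains $x_0Rx_1Rx_2\cdots$), $S$ ternary, $yS_xz$ meaning $(x,y,z)\in S$, each $S_x$ a reflexive transitive relation on $\{y:xRy\}$, and $xRyRz\Rightarrow yS_xz$. A model adds a valuation $V$; forcing standard for $\neg,\to$; $x\Vdash\Box A$ iff all $R$-successors force $A$; $x\Vdash A\rhd B$ iff for every $y$ with $xRy$, $y\Vdash A$ there is $z$ with $yS_xz$,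 $z\Vdash B$. $\mathbf{IL}\mathsf X$ is $\mathbf{IL}$ plus axiom schemes $\mathsf X$; it is Horn if there is a set $\mathcal C_{\mathsf X}$ of strict universal Horn sentences $\forall\cdots\forall(\varphi_1\wedge\dots\wedge\varphi_n\to\psi)$ ($n\ge0$, atomic $\varphi_i,\psi$) in the language $\{R,S\}$ such that an $\mathbf{IL}$-frame validates all theorems of $\mathbf{IL}\mathsf X$ iff it satisfies $\mathcal C_{\mathsf X}$; $\mathbf{IL}\mathsf X$-frames/models are those satisfying $\mathcal C_{\mathsf X}$. Labels: $0$; $\sigma Rn$ for a label $\sigma$, $n\in\mathbb N$; $\sigma S_\rho n$ for labels $\sigma,\rho$ with $\rho$ a strict non-empty prefix of $\sigma$. Extended formulas also allow unary operators $\Box_\rho$, $\rho$ a label. Labelled formula: $\sigma::A$. For a set $\Lambda$ of labels, $\mathbf R^\Lambda,\mathbf S^\Lambda$ are the least relations on $\Lambda$ with: (1) $\sigma,\sigma Rn\in\Lambda\Rightarrow\sigma\mathbf R\,\sigma Rn$; (2) $\mathbf R$ transitive; (3) $\sigma,\rho,\sigma S_\rho n\in\Lambda\Rightarrow\sigma\mathbf S_\rho\,\sigma S_\rho n$; (4) $\sigma\mathbf R\tau\Rightarrow\tau\mathbf S_\sigma\tau$; (5) $\rho\mathbf R\sigma\mathbf R\tau\Rightarrow\sigma\mathbf S_\rho\tau$; (6) $\sigma\mathbf S_\rho\tau\mathbf S_\rho\upsilon\Rightarrow\sigma\mathbf S_\rho\upsilon$; (7) $\sigma\mathbf S_\rho\tau\Rightarrow\rho\mathbf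 R\sigma,\rho\mathbf R\tau$; (8) $\langle\Lambda,\mathbf R^\Lambda,\mathbf S^\Lambda\rangle\models\mathcal C_{\mathsf X}$ (where $\sigma\mathbf S_\rho\tau$ means $(\rho,\sigma,\tau)\in\mathbf S^\Lambda$). For a branch $\mathcal B$, $\mathrm{lab}(\mathcal B)$ is the set of labels on it and relations refer to $\mathbf R^{\mathrm{lab}(\mathcal B)},\mathbf S^{\mathrm{lab}(\mathcal B)}$. A branch is closed if it contains $\sigma::A$ and $\sigma::\neg A$ for some $\sigma,A$, otherwise open. Systematic $\mathbf{IL}\mathsf X$-tableau for finite $\Gamma$: built in stages $T_0\subseteq T_1\subseteq\cdots$, nodes marked awake, asleep or finished. Stage 0: nodes $0::A$, $A\in\Gamma$, one below another, all awake. Stage $n+1$: choose an awake node $\sigma::A$ closest to the root (leftmost among ties). If $A$ is $p$ or $\neg p$ ($p\in\mathsf{Prop}$), mark it finished. Otherwise (new nodes marked awake; ''extend'' = append at the bottom): $\neg\neg B$: extend each open branch through it with $\sigma::B$; finished. $B\to C$: split each open branch through it, left $\sigma::\neg B$, right $\sigma::C$; finished. $\neg(B\to C)$: extend with $\sigma::B,\sigma::\neg C$; finished. $\Box B$: for each open branch $\mathcal B$ through it and each $\tau\in\mathrm{lab}(\mathcal B)$ with $\sigma\mathbf R\tau$, extend with $\tau::B$; asleep. $\neg\Box B$: for each open branch $\mathcal B$ through it, $n$ least with $\sigma Rn\notin\mathrm{lab}(\mathcal B)$, extend with $\sigma Rn::\neg B,\sigma Rn::\Box B$; finished; also mark awake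 every node $\tau::\Box D$, $\tau::D\rhd E$ on $\mathcal B$ with $\tau\mathbf R\,\sigma Rn$ and every $\tau::\Box_\kappa D$ on $\mathcal B$ with $\tau\mathbf S_\kappa\,\sigma Rn$. $\Box_\rho B$: for each branch $\mathcal B$ through it and each $\tau\in\mathrm{lab}(\mathcal B)$ with $\sigma\mathbf S_\rho\tau$, extend with $\tau::B$; asleep. $\neg\Box_\rho B$: for each open branch, $n$ least with $\sigma S_\rho n\notin\mathrm{lab}(\mathcal B)$, extend with $\sigma S_\rho n::\neg B,\sigma S_\rho n::\Box B$; finished; reawaken as in the $\neg\Box$ case with new label $\sigma S_\rho n$. $B\rhd C$: for each open branch $\mathcal B$ through it and each $\tau\in\mathrm{lab}(\mathcal B)$ with $\sigma\mathbf R\tau$, split, left $\tau::\neg B$, right $\tau::\neg\Box_\sigma\neg C$; asleep. $\neg(B\rhd C)$: for each open branch, $n$ least with $\sigma Rn\notin\mathrm{lab}(\mathcal B)$, extend with $\sigma Rn::B,\sigma Rn::\Box_\sigma\neg C,\sigma Rn::\Box\neg B$; finished; reawaken as in the $\neg\Box$ case. The systematic tableau is $\bigcup_iT_i$; it closes if all its branches are closed. *)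

(* Defs.v *)
From Stdlib Require Import List Arith PeanoNat.
Import ListNotations.

Inductive formula : Type :=
| Var : nat -> formula
| Neg : formula -> formula
| Imp : formula -> formula -> formula
| Box : formula -> formula
| Rhd : formula -> formula -> formula.

Definition And (A B : formula) : formula := Neg (Imp A (Neg B)).
Definition Or (A B : formula) : formula := Imp (Neg A) B.
Definition Dia (A : formula) : formula := Neg (Box (Neg A)).

Fixpoint subst (s : nat -> formula) (A : formula) : formula :=
  match A with
  | Var p => s p
  | Neg B => Neg (subst s B)
  | Imp B C => Imp (subst s B) (subst s C)
  | Box B => Box (subst s B)
  | Rhd B C => Rhd (subst s B) (subst s C)
  end.

(* propositional evaluation: variables, Box- and Rhd-formulas are atoms *)
Fixpoint peval (v : formula -> bool) (A : formula) : bool :=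
  match A with
  | Neg B => negb (peval v B)
  | Imp B C => implb (peval v B) (peval v C)
  | _ => v A
  end.

Definition tautology (A : formula) : Prop := forall v, peval v A = true.

(* Theorems of IL X; X is a set of axiom schemes, whose instances are
   all substitution instances of its members. *)
Inductive IL_thm (X : formula -> Prop) : formula -> Prop :=
| ax_taut A : tautology A -> IL_thm X A
| ax_K A B : IL_thm X (Imp (Box (Imp A B)) (Imp (Box A) (Box B)))
| ax_L A : IL_thm X (Imp (Box (Imp (Box A) A)) (Box A))
| ax_J1 A B : IL_thm X (Imp (Box (Imp A B)) (Rhd A B))
| ax_J2 A B C : IL_thm X (Imp (And (Rhd A B) (Rhd B C)) (Rhd A C))
| ax_J3 A B C : IL_thm X (Imp (And (Rhd A C) (Rhd B C)) (Rhd (Or A B) C))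
| ax_J4 A B : IL_thm X (Imp (Rhd A B) (Imp (Dia A) (Dia B)))
| ax_J5 A : IL_thm X (Rhd (Dia A) A)
| ax_X A s : X A -> IL_thm X (subst s A)
| r_MP A B : IL_thm X (Imp A B) -> IL_thm X A -> IL_thm X B
| r_Nec A : IL_thm X A -> IL_thm X (Box A).

(* IL-frames.  Sw x y z  means  y S_x z. *)
Record ILframe := {
  W : Type;
  Rw : W -> W -> Prop;
  Sw : W -> W -> W -> Prop;
  W_inhabited : inhabited W;
  R_trans : forall x y z, Rw x y -> Rw y z -> Rw x z;
  R_noeth : ~ (exists f : nat -> W, forall i, Rw (f i) (f (S i)));
  S_dom : forall x y z, Sw x y z -> Rw x y /\ Rw x z;
  S_refl : forall x y, Rw x y -> Sw x y y;
  S_trans : forall x y z u, Sw x y z -> Sw x z u -> Sw x y u;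
  R_S : forall x y z, Rw x y -> Rw y z -> Sw x y z
}.

Fixpoint forces (F : ILframe) (V : nat -> W F -> Prop) (x : W F) (A : formula)
  : Prop :=
  match A with
  | Var p => V p x
  | Neg B => ~ forces F V x B
  | Imp B C => forces F V x B -> forces F V x C
  | Box B => forall y, Rw F x y -> forces F V y B
  | Rhd B C => forall y, Rw F x y -> forces F V y B ->
                 exists z, Sw F x y z /\ forces F V z C
  end.

Definition validates_X (F : ILframe) (X : formula -> Prop) : Prop :=
  forall A, IL_thm X A -> forall (V : nat -> W F -> Prop) (x : W F), forces F V x A.

(* Strict universal Horn sentences in the language {R, S}.
   Variables are nats; HR i j is R(x_i,x_j); HS i j k is S(x_i,x_j,x_k),
   i.e. x_j S_{x_i} x_k. *)
Inductive hatom := HR (i j : nat) | HS (i j k : nat).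
Record horn := { hbody : list hatom; hhead : hatom }.

Definition atom_holds {T : Type} (R : T -> T -> Prop) (S : T -> T -> T -> Prop)
  (g : nat -> T) (a : hatom) : Prop :=
  match a with
  | HR i j => R (g i) (g j)
  | HS i j k => S (g i) (g j) (g k)
  end.

Definition horn_holds {T : Type} (D : T -> Prop) (R : T -> T -> Prop)
  (S : T -> T -> T -> Prop) (h : horn) : Prop :=
  forall g : nat -> T, (forall i, D (g i)) ->
    (forall a, In a (hbody h) -> atom_holds R S g a) -> atom_holds R S g (hhead h).

Definition frame_sat_C (F : ILframe) (C : horn -> Prop) : Prop :=
  forall h, C h -> horn_holds (fun _ => True) (Rw F) (Sw F) h.

Definition is_Horn (X : formula -> Prop) (C : horn -> Prop) : Prop :=
  forall F : ILframe, validates_X F X <-> frame_sat_C F C.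

(* Labels: L0 = 0, LR s n = s R n, LS s r n = s S_r n. *)
Inductive label : Type :=
| L0 : label
| LR : label -> nat -> label
| LS : label -> label -> nat -> label.

Inductive eformula : Type :=
| EVar : nat -> eformula
| ENeg : eformula -> eformula
| EImp : eformula -> eformula -> eformula
| EBox : eformula -> eformula
| EBoxL : label -> eformula -> eformula
| ERhd : eformula -> eformula -> eformula.

Fixpoint embed (A : formula) : eformula :=
  match A with
  | Var p => EVar p
  | Neg B => ENeg (embed B)
  | Imp B C => EImp (embed B) (embed C)
  | Box B => EBox (embed B)
  | Rhd B C => ERhd (embed B) (embed C)
  end.

Definition lformula : Type := (label * eformula)%type.

(* ground atoms over labels: GR s t = s R t ; GS r s t = s S_r t *)
Inductive gatom := GR (s t : label) | GS (r s t : label).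

Definition ginst (g : nat -> label) (a : hatom) : gatom :=
  match a with
  | HR i j => GR (g i) (g j)
  | HS i j k => GS (g i) (g j) (g k)
  end.

Inductive LRel (C : horn -> Prop) (L : label -> Prop) : gatom -> Prop :=
| lr1 s n : L s -> L (LR s n) -> LRel C L (GR s (LR s n))
| lr2 s t u : LRel C L (GR s t) -> LRel C L (GR t u) -> LRel C L (GR s u)
| lr3 s r n : L s -> L r -> L (LS s r n) -> LRel C L (GS r s (LS s r n))
| lr4 s t : LRel C L (GR s t) -> LRel C L (GS s t t)
| lr5 r s t : LRel C L (GR r s) -> LRel C L (GR s t) -> LRel C L (GS r s t)
| lr6 r s t u : LRel C L (GS r s t) -> LRel C L (GS r t u) -> LRel C L (GS r s u)
| lr7a r s t : LRel C L (GS r s t) -> LRel C L (GR r s)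
| lr7b r s t : LRel C L (GS r s t) -> LRel C L (GR r t)
| lr8 h g : C h -> (forall i, L (g i)) ->
    (forall a, In a (hbody h) -> LRel C L (ginst g a)) ->
    LRel C L (ginst g (hhead h)).

Definition LabR C L s t : Prop := LRel C L (GR s t).
Definition LabS C L r s t : Prop := LRel C L (GS r s t).

(* Tableau trees.  A tree maps node addresses (list of child indices,
   root = []) to (labelled formula, status). *)
Inductive status := Awake | Asleep | Finished.

Definition tree : Type := list nat -> option (lformula * status).

Definition prefix (a b : list nat) : Prop := exists c, b = a ++ c.
Definition defined (T : tree) (a : list nat) : Prop := exists x, T a = Some x.
Definition formula_at (T : tree) (a : list nat) (f : lformula) : Prop :=
  exists st, T a = Some (f, st).
Definition awake (T : tree) (a : list nat) : Prop := exists f, T a = Some (f, Awake).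

(* a branch of a finite stage tree is identified with its leaf *)
Definition leaf (T : tree) (l : list nat) : Prop := defined T l /\ T (l ++ [0]) = None.

Definition lab (T : tree) (l : list nat) (s : label) : Prop :=
  exists a e, prefix a l /\ formula_at T a (s, e).

Definition closed_leaf (T : tree) (l : list nat) : Prop :=
  exists a b s e, prefix a l /\ prefix b l /\
    formula_at T a (s, e) /\ formula_at T b (s, ENeg e).

Fixpoint lex_lt (a b : list nat) : Prop :=
  match a, b with
  | [], _ :: _ => True
  | x :: a', y :: b' => x < y \/ (x = y /\ lex_lt a' b')
  | _, _ => False
  end.
Definition node_before (a b : list nat) : Prop :=
  length a < length b \/ (length a = length b /\ lex_lt a b).
Definition chosen (T : tree) (n : list nat) : Prop :=
  awake T n /\ forall m, awake T m -> ~ node_before m n.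

(* Extensions appended at the bottom of a branch: a list of levels; Ext f
   appends one node, Split f g splits every current end into f | g. *)
Inductive level := Ext (f : lformula) | Split (f g : lformula).
Definition comp (l : level) (i : nat) : option lformula :=
  match l, i with
  | Ext f, 0 => Some f
  | Split f _, 0 => Some f
  | Split _ g, 1 => Some g
  | _, _ => None
  end.
Fixpoint frag_node (ls : list level) (r : list nat) : option lformula :=
  match ls, r with
  | l :: ls', i :: r' =>
      match comp l i with
      | None => None
      | Some f => match r' with [] => Some f | _ => frag_node ls' r' end
      end
  | _, _ => None
  end.

Definition enum_of (P : label -> Prop) (ts : list label) : Prop :=
  NoDup ts /\ forall t, In t ts <-> P t.

Definition least_fresh (P : label -> Prop) (mk : nat -> label) (k : nat) : Prop :=
  ~ P (mk k) /\ forall m, m < k -> P (mk m).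

Definition leaf_levels (C : horn -> Prop) (T : tree) (l : list nat) (s : label)
  (A : eformula) (ls : list level) : Prop :=
  let L := lab T l in
  match A with
  | EVar _ => ls = []
  | ENeg (EVar _) => ls = []
  | ENeg (ENeg B) => ls = [Ext (s, B)]
  | EImp B D => ls = [Split (s, ENeg B) (s, D)]
  | ENeg (EImp B D) => ls = [Ext (s, B); Ext (s, ENeg D)]
  | EBox B => exists ts, enum_of (fun t => L t /\ LabR C L s t) ts /\
                 ls = map (fun t => Ext (t, B)) ts
  | ENeg (EBox B) => exists k, least_fresh L (LR s) k /\
                 ls = [Ext (LR s k, ENeg B); Ext (LR s k, EBox B)]
  | EBoxL r B => exists ts, enum_of (fun t => L t /\ LabS C L r s t) ts /\
                 ls = map (fun t => Ext (t, B)) ts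
  | ENeg (EBoxL r B) => exists k, least_fresh L (LS s r) k /\
                 ls = [Ext (LS s r k, ENeg B); Ext (LS s r k, EBox B)]
  | ERhd B D => exists ts, enum_of (fun t => L t /\ LabR C L s t) ts /\
                 ls = map (fun t => Split (t, ENeg B) (t, ENeg (EBoxL s (ENeg D)))) ts
  | ENeg (ERhd B D) => exists k, least_fresh L (LR s) k /\
                 ls = [Ext (LR s k, B); Ext (LR s k, EBoxL s (ENeg D));
                       Ext (LR s k, EBox (ENeg B))]
  end.

Definition new_label (T : tree) (l : list nat) (s : label) (A : eformula)
  (v : label) : Prop :=
  let L := lab T l in
  match A with
  | ENeg (EBox _) => exists k, least_fresh L (LR s) k /\ v = LR s k
  | ENeg (ERhd _ _) => exists k, least_fresh L (LR s) k /\ v = LR s k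
  | ENeg (EBoxL r _) => exists k, least_fresh L (LS s r) k /\ v = LS s r k
  | _ => False
  end.

Definition status_after (A : eformula) : status :=
  match A with
  | EBox _ => Asleep
  | EBoxL _ _ => Asleep
  | ERhd _ _ => Asleep
  | _ => Finished
  end.

(* the Box_rho rule acts on every branch through the node, the others on
   every open branch through it *)
Definition all_branches (A : eformula) : Prop :=
  match A with EBoxL _ _ => True | _ => False end.

Definition processed (T : tree) (n : list nat) (A : eformula) (l : list nat) : Prop :=
  leaf T l /\ prefix n l /\ (all_branches A \/ ~ closed_leaf T l).

Definition wake_cond (C : horn -> Prop) (L' : label -> Prop) (v : label)
  (f : lformula) : Prop :=
  match f with
  | (t, EBox _) => LabR C L' t v
  | (t, ERhd _ _) => LabR C L' t v
  | (t, EBoxL k _) => LabS C L' k t v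
  | _ => False
  end.

Definition reawake (C : horn -> Prop) (T : tree) (n : list nat) (s : label)
  (A : eformula) (a : list nat) : Prop :=
  exists l v f, processed T n A l /\ prefix a l /\ new_label T l s A v /\
    formula_at T a f /\ wake_cond C (fun t => lab T l t \/ t = v) v f.

(* One stage of the systematic construction (choices: the order in which
   the labels tau are enumerated in the Box, Box_rho and Rhd rules). *)
Definition step (C : horn -> Prop) (T T' : tree) : Prop :=
  ((forall a, ~ awake T a) /\ forall a, T' a = T a) \/
  exists (n : list nat) (s : label) (A : eformula) (fr : list nat -> list level),
    chosen T n /\ T n = Some ((s, A), Awake) /\
    (forall l, processed T n A l -> leaf_levels C T l s A (fr l)) /\
    (forall a f st, T a = Some (f, st) ->
       exists st', T' a = Some (f, st') /\
         (a = n -> st' = status_after A) /\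
         (a <> n -> (reawake C T n s A a -> st' = Awake) /\
                    (~ reawake C T n s A a -> st' = st))) /\
    (forall l r, processed T n A l -> r <> [] ->
       T' (l ++ r) = option_map (fun f => (f, Awake)) (frag_node (fr l) r)) /\
    (forall a, T a = None ->
       (forall l r, processed T n A l -> r <> [] -> a <> l ++ r) -> T' a = None).

Definition init_tree (G : list formula) : tree := fun a =>
  if forallb (fun x => Nat.eqb x 0) a then
    match nth_error G (length a) with
    | Some A => Some ((L0, embed A), Awake)
    | None => None
    end
  else None.

Definition systematic_tableau (C : horn -> Prop) (G : list formula)
  (T : nat -> tree) : Prop :=
  T 0 = init_tree G /\ forall i, step C (T i) (T (S i)).

(* The systematic tableau is the union of the stages. *)
Definition union_defined (T : nat -> tree) (a : list nat) : Prop :=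
  exists i, defined (T i) a.
Definition union_formula_at (T : nat -> tree) (a : list nat) (f : lformula) : Prop :=
  exists i, formula_at (T i) a f.

(* branches of the union: maximal chains of nodes (possibly infinite) *)
Definition union_branch (T : nat -> tree) (P : list nat -> Prop) : Prop :=
  (forall a, P a -> union_defined T a) /\
  (forall a b, P b -> prefix a b -> P a) /\
  (forall a b, P a -> P b -> prefix a b \/ prefix b a) /\
  (forall a, union_defined T a -> (forall b, P b -> prefix a b \/ prefix b a) -> P a).

Definition branch_closed (T : nat -> tree) (P : list nat -> Prop) : Prop :=
  exists a b s e, P a /\ P b /\
    union_formula_at T a (s, e) /\ union_formula_at T b (s, ENeg e).

Definition tableau_closes (T : nat -> tree) : Prop :=
  forall P, union_branch T P -> branch_closed T P.

(* Main.v *)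
Require Import Defs.
From Stdlib Require Import List Arith PeanoNat Lia Classical ClassicalEpsilon FunctionalExtensionality.
Import ListNotations.

Lemma prefix_refl a : prefix a a.
Proof. exists []; rewrite app_nil_r; auto. Qed.
Lemma prefix_trans a b c : prefix a b -> prefix b c -> prefix a c.
Proof. intros [x ->] [y ->]; exists (x++y); rewrite app_assoc; auto. Qed.
Lemma prefix_app a b : prefix a (a ++ b).
Proof. exists b; auto. Qed.

Lemma prefix_split a l r : prefix a (l ++ r) ->
  (exists d, l = a ++ d) \/ (exists r1 r2, r1 <> [] /\ a = l ++ r1 /\ r = r1 ++ r2).
Proof.
  intros [c Hc]. apply app_eq_app in Hc. destruct Hc as [x [[H1 H2]|[H1 H2]]].
  - left; eauto.
  - destruct x as [|y x].
    + left; exists []. rewrite app_nil_r in H1. rewrite H1, app_nil_r; auto.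
    + right; exists (y::x), c; repeat split; auto; discriminate.
Qed.

Lemma prefix_comp a b c : prefix a c -> prefix b c -> prefix a b \/ prefix b a.
Proof.
  intros [x Hx] [y Hy]. rewrite Hx in Hy. apply app_eq_app in Hy.
  destruct Hy as [z [[H1 H2]|[H1 H2]]]; [right|left]; exists z; auto.
Qed.

Lemma prefix_len a b : prefix a b -> length a <= length b.
Proof. intros [x ->]; rewrite length_app; lia. Qed.

Fixpoint pathok (P : lformula -> Prop) (ls : list level) (r : list nat) : Prop :=
  match ls, r with
  | [], [] => True
  | l :: ls', i :: r' => exists fm, comp l i = Some fm /\ P fm /\ pathok P ls' r'
  | _, _ => False end.

Lemma pathok_prefix P ls r : pathok P ls r -> forall r1 r2, r = r1 ++ r2 -> r1 <> [] ->
  exists fm, frag_node ls r1 = Some fm /\ P fm.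
Proof.
  revert r; induction ls as [|lv ls IH]; intros r H r1 r2 E N.
  - destruct r; simpl in H; try contradiction. destruct r1; [congruence|discriminate].
  - destruct r as [|i r]; simpl in H; try contradiction.
    destruct H as [fm [Hc [Hp Hr]]]. destruct r1 as [|j r1]; [congruence|].
    simpl in E. injection E as -> E. simpl. rewrite Hc.
    destruct r1 as [|k r1]; eauto.
    apply (IH r Hr (k::r1) r2 E). discriminate.
Qed.

Lemma pathok_end P ls r : pathok P ls r -> forall c, c <> [] -> frag_node ls (r ++ c) = None.
Proof.
  revert r; induction ls as [|lv ls IH]; intros r H c N.
  - destruct r; simpl in H; try contradiction. simpl. destruct c; reflexivity.
  - destruct r as [|i r]; simpl in H; try contradiction.
    destruct H as [fm [Hc [Hp Hr]]]. simpl. rewrite Hc.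
    destruct (r ++ c) eqn:E.
    + apply app_eq_nil in E; tauto.
    + rewrite <- E. apply IH; auto.
Qed.

Lemma pathok_map P (g : label -> level) ts :
  (forall t, In t ts -> exists i fm, comp (g t) i = Some fm /\ P fm) ->
  exists r, pathok P (map g ts) r.
Proof.
  induction ts as [|t ts IH]; intros H.
  - exists []; simpl; auto.
  - destruct (H t (or_introl eq_refl)) as [i [fm [H1 H2]]].
    destruct IH as [r Hr]. { intros; apply H; simpl; auto. }
    exists (i :: r); simpl; eauto.
Qed.

Lemma frag_prefix ls r1 r2 : r1 <> [] -> frag_node ls (r1 ++ r2) <> None -> frag_node ls r1 <> None.
Proof.
  revert r1; induction ls as [|lv ls IH]; intros r1 N H.
  - destruct r1; simpl in *; congruence.
  - destruct r1 as [|i r1]; [congruence|]. simpl in *.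
    destruct (comp lv i) eqn:Hc; [|congruence].
    destruct r1 as [|k r1]; [congruence|].
    simpl in H. apply (IH (k::r1)); [discriminate|auto].
Qed.

Lemma comp0 lv : comp lv 0 <> None.
Proof. destruct lv; simpl; discriminate. Qed.

Lemma frag_zero ls r1 c : c <> [] -> frag_node ls (r1 ++ c) <> None -> frag_node ls (r1 ++ [0]) <> None.
Proof.
  revert ls; induction r1 as [|i r1 IH]; intros ls N H.
  - destruct ls as [|lv ls]; simpl in H; [destruct c; congruence|].
    destruct c as [|j c]; [congruence|]. simpl. pose proof (comp0 lv).
    destruct (comp lv 0); congruence.
  - destruct ls as [|lv ls]; simpl in *; [congruence|].
    destruct (comp lv i); [|congruence].
    specialize (IH ls N).
    destruct (r1 ++ c) eqn:E; [apply app_eq_nil in E; tauto|].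
    destruct (r1 ++ [0]) eqn:E2; [apply app_eq_nil in E2; destruct E2; discriminate|].
    apply IH; exact H.
Qed.

Fixpoint elabs (e : eformula) (u : label) : Prop :=
 match e with EVar _ => False | ENeg B => elabs B u | EImp B D => elabs B u \/ elabs D u
 | EBox B => elabs B u | EBoxL r B => u = r \/ elabs B u | ERhd B D => elabs B u \/ elabs D u end.

Fixpoint ef (M : ILframe) (V : nat -> W M -> Prop) (f : label -> W M) (w : W M) (e : eformula) : Prop :=
 match e with
 | EVar p => V p w
 | ENeg B => ~ ef M V f w B
 | EImp B D => ef M V f w B -> ef M V f w D
 | EBox B => forall y, Rw M w y -> ef M V f y B
 | EBoxL r B => forall z, Sw M (f r) w z -> ef M V f z B
 | ERhd B D => forall y, Rw M w y -> ef M V f y B -> exists z, Sw M w y z /\ ef M V f z D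
 end.

Lemma ef_agree M V f f' e : (forall u, elabs e u -> f u = f' u) ->
  forall w, ef M V f w e <-> ef M V f' w e.
Proof.
  induction e; simpl; intros H w.
  - tauto.
  - rewrite IHe; tauto.
  - rewrite IHe1, IHe2; auto; tauto.
  - split; intros; apply IHe; auto.
  - rewrite (H l (or_introl eq_refl)). split; intros; apply IHe; auto.
  - split; intros H1 y Hy Hb; [rewrite <- IHe1 in Hb by auto|rewrite IHe1 in Hb by auto];
    destruct (H1 y Hy Hb) as [z [Hz Hd]]; exists z; split; auto; apply IHe2; auto.
Qed.

Lemma ef_embed M V f A : forall w, ef M V f w (embed A) <-> forces M V w A.
Proof.
  induction A; simpl; intros w.
  - tauto.
  - rewrite IHA; tauto.
  - rewrite IHA1, IHA2; tauto.
  - split; intros; apply IHA; auto.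
  - split; intros H1 y Hy Hb; [rewrite <- IHA1 in Hb|rewrite IHA1 in Hb];
    destruct (H1 y Hy Hb) as [z [Hz Hd]]; exists z; split; auto; apply IHA2; auto.
Qed.

Definition BFgen (M : ILframe) (L Lp : label -> Prop) (f : label -> W M) : Prop :=
  forall t, L t -> match t with L0 => True
   | LR s n => Lp s /\ Rw M (f s) (f t)
   | LS s r n => Lp s /\ Lp r /\ Sw M (f r) (f s) (f t) end.

Definition gtrue M (f : label -> W M) a :=
  match a with GR s t => Rw M (f s) (f t) | GS r s t => Sw M (f r) (f s) (f t) end.

Lemma LRel_sound M C L Lp f : frame_sat_C M C -> BFgen M L Lp f ->
  forall a, LRel C L a -> gtrue M f a.
Proof.
  intros Hsat HB a H. induction H; simpl in *.
  - apply (HB _ H0).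
  - eapply R_trans; eauto.
  - apply (HB _ H1).
  - apply S_refl; auto.
  - apply R_S; auto.
  - eapply S_trans; eauto.
  - apply (S_dom _ _ _ _ IHLRel).
  - apply (S_dom _ _ _ _ IHLRel).
  - pose proof (Hsat h H (fun i => f (g i)) (fun _ => I)) as Hh.
    assert (E : forall a, atom_holds (Rw M) (Sw M) (fun i => f (g i)) a <-> gtrue M f (ginst g a))
      by (intros []; simpl; tauto).
    apply E, Hh. intros a Ha. apply E, H2; auto.
Qed.

Lemma noeth_max (M : ILframe) (Q : W M -> Prop) z0 : Q z0 ->
  exists z, Q z /\ forall z', Rw M z z' -> ~ Q z'.
Proof.
  intros H0. apply NNPP; intro Hn.
  assert (Hs : forall z, Q z -> exists z', Rw M z z' /\ Q z').
  { intros z Hz. apply NNPP; intro Hc. apply Hn. exists z; split; auto.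
    intros z' Hr Hq. apply Hc; eauto. }
  set (h := fun z => epsilon (inhabits z0) (fun z' => Rw M z z' /\ Q z')).
  assert (HQ : forall n, Q (Nat.iter n h z0)).
  { induction n; simpl; auto. apply (epsilon_spec (inhabits z0) (fun z' => Rw M _ z' /\ Q z')).
    apply Hs; auto. }
  apply (R_noeth M). exists (fun n => Nat.iter n h z0). intros i. simpl.
  apply (epsilon_spec (inhabits z0) (fun z' => Rw M _ z' /\ Q z')). apply Hs; auto.
Qed.

Definition PC (T : tree) := forall a b, defined T (a ++ b) -> defined T a.
Definition JJ (T : tree) := forall a c, c <> [] -> defined T (a ++ c) -> defined T (a ++ [0]).

Definition Hpres_def (T T' : tree) := forall a fm st, T a = Some (fm, st) -> exists st', T' a = Some (fm, st').

Lemma pcj_pres T T' (Pr : list nat -> Prop) (fr : list nat -> list level) :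
  PC T -> JJ T -> (forall l, Pr l -> leaf T l) -> Hpres_def T T' ->
  (forall l r, Pr l -> r <> [] -> T' (l ++ r) = option_map (fun f => (f, Awake)) (frag_node (fr l) r)) ->
  (forall a, T a = None -> (forall l r, Pr l -> r <> [] -> a <> l ++ r) -> T' a = None) ->
  PC T' /\ JJ T'.
Proof.
  intros HPC HJ Hleaf Hp Hnew Hnone.
  assert (Dp : forall a, defined T a -> defined T' a).
  { intros a [[fm st] H]. destruct (Hp _ _ _ H) as [st' H']. eexists; eauto. }
  assert (Cs : forall a, defined T' a -> defined T a \/
            exists l r, Pr l /\ r <> [] /\ a = l ++ r /\ frag_node (fr l) r <> None).
  { intros a Ha. destruct (T a) eqn:E; [left; eexists; eauto|right].
    apply NNPP; intro Hc. destruct Ha as [x Hx].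
    assert (Hnn : ~ (forall l r, Pr l -> r <> [] -> a <> l ++ r)).
    { intro Hq. rewrite (Hnone a E Hq) in Hx. discriminate. }
    apply Hnn. intros l r Pl Nr Ea. apply Hc. exists l, r; repeat split; auto.
    subst a. rewrite (Hnew l r Pl Nr) in Hx. destruct (frag_node (fr l) r); simpl in *; congruence. }
  assert (Dn : forall l r, Pr l -> r <> [] -> frag_node (fr l) r <> None -> defined T' (l ++ r)).
  { intros l r Pl Nr Hf. unfold defined. rewrite Hnew by auto. destruct (frag_node (fr l) r); [eexists; simpl; eauto|congruence]. }
  split.
  - intros a b Hab. destruct (Cs _ Hab) as [H|[l [r [Pl [Nr [Ea Hf]]]]]].
    + apply Dp, (HPC a b H).
    + assert (Hpr : prefix a (l ++ r)) by (rewrite <- Ea; apply prefix_app).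
      destruct (prefix_split _ _ _ Hpr) as [[d Ed]|[r1 [r2 [N1 [E1 E2]]]]].
      * apply Dp. apply (HPC a d). rewrite <- Ed. destruct (Hleaf l Pl); auto.
      * subst a r. apply Dn; auto. apply frag_prefix with r2; auto.
  - intros a c Nc Hac. destruct (Cs _ Hac) as [H|[l [r [Pl [Nr [Ea Hf]]]]]].
    + apply Dp, (HJ a c Nc H).
    + assert (Hpr : prefix a (l ++ r)) by (rewrite <- Ea; apply prefix_app).
      destruct (prefix_split _ _ _ Hpr) as [[d Ed]|[r1 [r2 [N1 [E1 E2]]]]].
      * destruct d as [|y d].
        -- rewrite app_nil_r in Ed. subst l. apply Dn; [auto|discriminate|].
           apply (frag_zero _ [] r); auto.
        -- apply Dp. apply (HJ a (y::d)); [discriminate|]. rewrite <- Ed. destruct (Hleaf l Pl); auto.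
      * subst a r. rewrite <- app_assoc in Ea. apply app_inv_head in Ea. apply app_inv_head in Ea. subst r2.
        rewrite <- app_assoc. apply Dn; auto. { destruct r1; simpl; discriminate. }
        apply frag_zero with c; auto.
Qed.

Lemma np_leaf T T' (Pr : list nat -> Prop) l :
  JJ T -> leaf T l -> ~ Pr l -> (forall l2, Pr l2 -> leaf T l2) -> Hpres_def T T' ->
  (forall a, T a = None -> (forall l r, Pr l -> r <> [] -> a <> l ++ r) -> T' a = None) ->
  leaf T' l.
Proof.
  intros HJ [[[fm st] Hd] Hn] Np Hleaf Hp Hnone. split.
  - destruct (Hp _ _ _ Hd) as [st' H']; eexists; eauto.
  - apply Hnone; auto. intros l2 r P2 Nr E.
    assert (Hpr : prefix l2 (l ++ [0])) by (rewrite E; apply prefix_app).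
    destruct (prefix_split _ _ _ Hpr) as [[d Ed]|[r1 [r2 [N1 [E1 E2]]]]].
    + destruct d as [|y d].
      * rewrite app_nil_r in Ed; subst; auto.
      * destruct (Hleaf l2 P2) as [_ H2]. destruct (HJ l2 (y::d)) as [x Hx]; [discriminate| |congruence].
        rewrite <- Ed; eexists; eauto.
    + destruct r1 as [|z r1]; [congruence|]. simpl in E2. injection E2 as <- E2.
      destruct r1; [|discriminate]. subst l2. destruct (Hleaf _ P2) as [[x Hx] _]. congruence.
Qed.

Definition Inv M V (T : tree) (l : list nat) (f : label -> W M) : Prop :=
  leaf T l /\
  (forall a t e, prefix a l -> formula_at T a (t, e) -> ef M V f (f t) e) /\
  (forall a t e, prefix a l -> formula_at T a (t, e) -> forall u, elabs e u -> lab T l u) /\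
  BFgen M (lab T l) (lab T l) f.

Lemma finish M V T T' l r f f' (N : label -> Prop) :
  PC T -> Inv M V T l f -> Hpres_def T T' -> leaf T' (l ++ r) ->
  (forall r1 r2, r = r1 ++ r2 -> r1 <> [] -> exists fm st, T' (l ++ r1) = Some (fm, st) /\
       (lab T l (fst fm) \/ N (fst fm)) /\ (forall u, elabs (snd fm) u -> lab T l u) /\
       ef M V f' (f' (fst fm)) (snd fm)) ->
  (forall u, lab T l u -> f' u = f u) ->
  BFgen M N (lab T l) f' ->
  Inv M V T' (l ++ r) f'.
Proof.
  intros HPC [Hleaf [Htr [Hlo HBF]]] Hp Hleaf' Hnew Hag HBN.
  assert (NC : forall a fm, prefix a (l ++ r) -> formula_at T' a fm ->
     (prefix a l /\ formula_at T a fm) \/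
     ((lab T l (fst fm) \/ N (fst fm)) /\ (forall u, elabs (snd fm) u -> lab T l u) /\
       ef M V f' (f' (fst fm)) (snd fm))).
  { intros a fm Ha [st Hst]. destruct (prefix_split _ _ _ Ha) as [[d Ed]|[r1 [r2 [N1 [E1 E2]]]]].
    - left. split; [exists d; auto|].
      destruct (HPC a d) as [[fm0 st0] H0]. { rewrite <- Ed; apply Hleaf. }
      destruct (Hp _ _ _ H0) as [st' H']. rewrite H' in Hst. injection Hst as -> ->.
      exists st0; auto.
    - right. destruct (Hnew r1 r2 E2 N1) as [fm1 [st1 [H1 HP]]]. subst a.
      rewrite H1 in Hst. injection Hst as -> ->. auto. }
  assert (Lsub : forall t, lab T' (l ++ r) t -> lab T l t \/ N t).
  { intros t [a [e [Ha Hf]]]. destruct (NC a _ Ha Hf) as [[H1 H2]|[H1 _]].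
    - left; exists a, e; auto.
    - exact H1. }
  assert (Lsup : forall t, lab T l t -> lab T' (l ++ r) t).
  { intros t [a [e [Ha [st Hf]]]]. destruct (Hp _ _ _ Hf) as [st' H'].
    exists a, e; split; [eapply prefix_trans; [exact Ha|apply prefix_app]|exists st'; auto]. }
  split; [exact Hleaf'|]. split; [|split].
  - intros a t e Ha Hf. destruct (NC a _ Ha Hf) as [[H1 H2]|[_ [H1 H2]]]; [|exact H2].
    pose proof (Htr a t e H1 H2) as Ht.
    rewrite Hag by (destruct H2; exists a, e; split; [exact H1|exists x; auto]).
    apply (ef_agree M V f f'); auto. intros u Hu. symmetry. apply Hag. eapply Hlo; eauto.
  - intros a t e Ha Hf u Hu. apply Lsup. destruct (NC a _ Ha Hf) as [[H1 H2]|[_ [H1 H2]]].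
    + eapply Hlo; eauto.
    + apply H1; auto.
  - intros t Ht. destruct (Lsub t Ht) as [H|H].
    + pose proof (HBF t H) as Hb. destruct t as [|s n|s q n]; auto.
      * destruct Hb as [Hs Hr]. split; [apply Lsup; auto|]. rewrite !Hag; auto.
      * destruct Hb as [Hs [Hq Hr]]. split; [apply Lsup; auto|split; [apply Lsup; auto|]].
        rewrite !Hag; auto.
    + pose proof (HBN t H) as Hb. destruct t as [|s n|s q n]; auto.
      * destruct Hb as [Hs Hr]; split; auto.
      * destruct Hb as [Hs [Hq Hr]]; repeat split; auto.
Qed.

Definition label_eq_dec (x y : label) : {x = y} + {x <> y}.
Proof. decide equality; apply Nat.eq_dec. Defined.

Definition Hnew_def (T' : tree) l ls := forall r, r <> [] ->
  T' (l ++ r) = option_map (fun f => (f, Awake)) (frag_node ls r).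

Lemma leaf_new P T T' l ls r : defined T l -> Hpres_def T T' -> Hnew_def T' l ls ->
  pathok P ls r -> leaf T' (l ++ r).
Proof.
  intros [[fm st] Hd] Hp Hn Hr. split.
  - destruct r as [|i r].
    + rewrite app_nil_r. destruct (Hp _ _ _ Hd) as [st' H']; eexists; eauto.
    + destruct (pathok_prefix _ _ _ Hr (i::r) [] (eq_sym (app_nil_r _))) as [fm1 [H1 _]]; [discriminate|].
      red. rewrite Hn by discriminate. rewrite H1. eexists; simpl; eauto.
  - rewrite <- app_assoc, Hn. rewrite (pathok_end _ _ _ Hr); auto; discriminate.
    destruct r; simpl; discriminate.
Qed.

Lemma caseA M V T T' l f ls r :
  PC T -> Inv M V T l f -> Hpres_def T T' -> Hnew_def T' l ls ->
  pathok (fun fm => lab T l (fst fm) /\ (forall u, elabs (snd fm) u -> lab T l u) /\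
                    ef M V f (f (fst fm)) (snd fm)) ls r ->
  exists l' f', Inv M V T' l' f' /\ prefix l l'.
Proof.
  intros HPC HI Hp Hn Hr. exists (l ++ r), f. split; [|apply prefix_app].
  apply (finish M V T T' l r f f (fun _ => False)); auto.
  - eapply leaf_new; eauto. apply HI.
  - intros r1 r2 E N1. destruct (pathok_prefix _ _ _ Hr r1 r2 E N1) as [fm [H1 H2]].
    exists fm, Awake. rewrite Hn, H1 by auto. split; auto. tauto.
  - intros t [].
Qed.

Lemma caseB M V T T' l f ls r v y :
  PC T -> Inv M V T l f -> Hpres_def T T' -> Hnew_def T' l ls ->
  ~ lab T l v ->
  match v with L0 => True | LR s n => lab T l s /\ Rw M (f s) y
   | LS s q n => lab T l s /\ lab T l q /\ Sw M (f q) (f s) y end ->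
  pathok (fun fm => fst fm = v /\ (forall u, elabs (snd fm) u -> lab T l u) /\
                    ef M V f y (snd fm)) ls r ->
  exists l' f', Inv M V T' l' f' /\ prefix l l'.
Proof.
  intros HPC HI Hp Hn Nv Hv Hr.
  set (f' := fun u => if label_eq_dec u v then y else f u).
  assert (Hag : forall u, lab T l u -> f' u = f u).
  { intros u Hu. unfold f'. destruct (label_eq_dec u v); auto. subst; contradiction. }
  assert (Hfv : f' v = y) by (unfold f'; destruct (label_eq_dec v v); congruence).
  exists (l ++ r), f'. split; [|apply prefix_app].
  apply (finish M V T T' l r f f' (fun t => t = v)); auto.
  - eapply leaf_new; eauto. apply HI.
  - intros r1 r2 E N1. destruct (pathok_prefix _ _ _ Hr r1 r2 E N1) as [fm [H1 [H2 [H3 H4]]]].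
    exists fm, Awake. rewrite Hn, H1 by auto. split; auto. split; auto. split; auto.
    rewrite H2, Hfv. apply (ef_agree M V f f'); auto. intros u Hu; symmetry; apply Hag, H3, Hu.
  - intros t ->. destruct v as [|s n|s q n]; auto.
    + destruct Hv as [Hs Hr']. split; auto. rewrite Hfv, Hag; auto.
    + destruct Hv as [Hs [Hq Hr']]. repeat split; auto. rewrite Hfv, !Hag; auto.
Qed.

Lemma caseA2 M V T T' l f ls :
  PC T -> Inv M V T l f -> Hpres_def T T' -> Hnew_def T' l ls ->
  (exists r, pathok (fun fm => lab T l (fst fm) /\ (forall u, elabs (snd fm) u -> lab T l u) /\
                    ef M V f (f (fst fm)) (snd fm)) ls r) ->
  exists l' f', Inv M V T' l' f' /\ prefix l l'.
Proof. intros H1 H2 H3 H4 [r Hr]; eapply caseA; eauto. Qed.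

Lemma processed_case M V C T T' l f s A ls :
  frame_sat_C M C -> PC T -> Inv M V T l f -> Hpres_def T T' -> Hnew_def T' l ls ->
  lab T l s -> (forall u, elabs A u -> lab T l u) -> ef M V f (f s) A ->
  leaf_levels C T l s A ls ->
  exists l' f', Inv M V T' l' f' /\ prefix l l'.
Proof.
  intros Hsat HPC HI Hp Hn Hs HA Ht Hlev.
  pose proof (proj2 (proj2 (proj2 HI))) as HBF.
  assert (SR : forall t, LabR C (lab T l) s t -> Rw M (f s) (f t))
    by (intros t H; exact (LRel_sound _ _ _ _ _ Hsat HBF _ H)).
  assert (SS : forall q t, LabS C (lab T l) q s t -> Sw M (f q) (f s) (f t))
    by (intros q t H; exact (LRel_sound _ _ _ _ _ Hsat HBF _ H)).
  destruct A as [p|B|B D|B|q B|B D]; simpl in Hlev, Ht, HA.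
  - subst ls. apply (caseA2 M V T T' l f _ HPC HI Hp Hn). exists []; simpl; auto.
  - destruct B as [p|B|B D|B|q B|B D]; simpl in Hlev, Ht, HA.
    + subst ls. apply (caseA2 M V T T' l f _ HPC HI Hp Hn). exists []; simpl; auto.
    + subst ls. apply (caseA2 M V T T' l f _ HPC HI Hp Hn). exists [0]; simpl.
      eexists; split; [reflexivity|]. simpl. repeat split; auto. apply NNPP; auto.
    + subst ls. apply (caseA2 M V T T' l f _ HPC HI Hp Hn). exists [0;0]; simpl.
      eexists; split; [reflexivity|]. simpl. split; [split; [auto|split; [intros; apply HA; auto|apply NNPP; tauto]]|].
      eexists; split; [reflexivity|]. simpl. split; [split; [auto|split; [intros; apply HA; auto|tauto]]|]. auto.
    + destruct Hlev as [k [[Hk _] ->]].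
      assert (Ex : exists y, Rw M (f s) y /\ ~ ef M V f y B).
      { apply NNPP; intro Hc; apply Ht; intros y Hy; apply NNPP; intro Hb; apply Hc; eauto. }
      destruct Ex as [y0 Hy0]. destruct (noeth_max M (fun y => Rw M (f s) y /\ ~ ef M V f y B) y0 Hy0) as [y [[Hy1 Hy2] Hmax]].
      apply (caseB M V T T' l f _ [0;0] (LR s k) y HPC HI Hp Hn); auto. simpl.
      eexists; split; [reflexivity|]. simpl. split; [repeat split; auto|].
      eexists; split; [reflexivity|]. simpl. split; [|auto]. repeat split; auto.
      intros z Hz. apply NNPP; intro Hb. apply (Hmax z Hz). split; auto. eapply R_trans; eauto.
    + destruct Hlev as [k [[Hk _] ->]].
      assert (Ex : exists z, Sw M (f q) (f s) z /\ ~ ef M V f z B).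
      { apply NNPP; intro Hc; apply Ht; intros y Hy; apply NNPP; intro Hb; apply Hc; eauto. }
      destruct Ex as [y0 Hy0]. destruct (noeth_max M (fun z => Sw M (f q) (f s) z /\ ~ ef M V f z B) y0 Hy0) as [y [[Hy1 Hy2] Hmax]].
      apply (caseB M V T T' l f _ [0;0] (LS s q k) y HPC HI Hp Hn); auto.
      simpl.
      eexists; split; [reflexivity|]. simpl. split; [repeat split; auto|].
      eexists; split; [reflexivity|]. simpl. split; [|auto]. repeat split; auto.
      intros z Hz. apply NNPP; intro Hb. apply (Hmax z Hz). split; auto.
      eapply S_trans; [exact Hy1|]. apply R_S; auto. apply (S_dom _ _ _ _ Hy1).
    + destruct Hlev as [k [[Hk _] ->]].
      assert (Ex : exists y, Rw M (f s) y /\ ef M V f y B /\ forall z, Sw M (f s) y z -> ~ ef M V f z D).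
      { apply NNPP; intro Hc; apply Ht; intros y Hy HB; apply NNPP; intro Hz; apply Hc.
        exists y; repeat split; auto. intros z Hz1 Hz2; apply Hz; eauto. }
      destruct Ex as [y0 Hy0]. destruct (noeth_max M (fun y => Rw M (f s) y /\ ef M V f y B /\ forall z, Sw M (f s) y z -> ~ ef M V f z D) y0 Hy0) as [y [[Hy1 [Hy2 Hy3]] Hmax]].
      apply (caseB M V T T' l f _ [0;0;0] (LR s k) y HPC HI Hp Hn); auto. simpl.
      eexists; split; [reflexivity|]. simpl. split; [repeat split; auto|].
      eexists; split; [reflexivity|]. simpl. split; [repeat split; auto; intros u [->|Hu]; auto|].
      eexists; split; [reflexivity|]. simpl. split; [|auto]. repeat split; auto.
      intros z Hz Hb. apply (Hmax z Hz). split; [eapply R_trans; eauto|split; auto].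
      intros w Hw. apply Hy3. eapply S_trans; [|exact Hw]. apply R_S; auto.
  - subst ls. apply (caseA2 M V T T' l f _ HPC HI Hp Hn). destruct (classic (ef M V f (f s) B)) as [HB|HB].
    + exists [1]; simpl. eexists; split; [reflexivity|]. simpl. repeat split; auto.
    + exists [0]; simpl. eexists; split; [reflexivity|]. simpl. repeat split; auto.
  - destruct Hlev as [ts [[_ Hts] ->]]. apply (caseA2 M V T T' l f _ HPC HI Hp Hn). apply pathok_map.
    intros t Hin. apply Hts in Hin. destruct Hin as [Hl Hr].
    exists 0; eexists; split; [reflexivity|]. simpl. repeat split; auto.
  - destruct Hlev as [ts [[_ Hts] ->]]. apply (caseA2 M V T T' l f _ HPC HI Hp Hn). apply pathok_map.
    intros t Hin. apply Hts in Hin. destruct Hin as [Hl Hr].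
    exists 0; eexists; split; [reflexivity|]. simpl. repeat split; auto.
  - destruct Hlev as [ts [[_ Hts] ->]]. apply (caseA2 M V T T' l f _ HPC HI Hp Hn). apply pathok_map.
    intros t Hin. apply Hts in Hin. destruct Hin as [Hl Hr].
    destruct (classic (ef M V f (f t) B)) as [HB|HB].
    + exists 1; eexists; split; [reflexivity|]. simpl. repeat split; auto.
      * intros u [->|Hu]; auto.
      * destruct (Ht (f t) (SR t Hr) HB) as [z [Hz1 Hz2]]. intro Hc; apply (Hc z Hz1 Hz2).
    + exists 0; eexists; split; [reflexivity|]. simpl. repeat split; auto.
Qed.

Lemma dep_seq {X : Type} (I : nat -> X -> Prop) (Rl : X -> X -> Prop) :
  (exists x0, I 0 x0) -> (forall i x, I i x -> exists y, I (S i) y /\ Rl x y) ->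
  exists s : nat -> X, (forall i, I i (s i)) /\ (forall i, Rl (s i) (s (S i))).
Proof.
  intros [x0 H0] Hs.
  set (nxt := fun i x => epsilon (inhabits x0) (fun y => I (S i) y /\ Rl x y)).
  set (s := fix s (i : nat) : X := match i with 0 => epsilon (inhabits x0) (I 0) | S k => nxt k (s k) end).
  assert (HI : forall i, I i (s i)).
  { induction i; simpl.
    - apply (epsilon_spec (inhabits x0) (I 0)); eauto.
    - apply (epsilon_spec (inhabits x0) (fun y => I (S i) y /\ Rl (s i) y)); auto. }
  exists s; split; auto. intros i. simpl.
  apply (epsilon_spec (inhabits x0) (fun y => I (S i) y /\ Rl (s i) y)); auto.
Qed.

Lemma init_def G a : defined (init_tree G) a <-> forallb (fun x => Nat.eqb x 0) a = true /\ length a < length G.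
Proof.
  unfold defined, init_tree. destruct (forallb _ a).
  - destruct (nth_error G (length a)) eqn:E.
    + split; [intros _; split; auto|intros _; eexists; eauto]. apply nth_error_Some; congruence.
    + split; [intros [y Hy]; discriminate|intros [_ H]]. apply nth_error_Some in H; congruence.
  - split; [intros [y Hy]; discriminate|intros [H _]; discriminate].
Qed.

Lemma init_PC G : PC (init_tree G).
Proof.
  intros a b H. apply init_def in H. apply init_def. rewrite forallb_app, length_app in H.
  destruct H as [H1 H2]. apply andb_prop in H1. split; [tauto|lia].
Qed.

Lemma init_JJ G : JJ (init_tree G).
Proof.
  intros a c Nc H. apply init_def in H. apply init_def. rewrite forallb_app, length_app in *.
  destruct H as [H1 H2]. apply andb_prop in H1. destruct H1 as [H1 _]. rewrite H1. simpl.
  destruct c; [congruence|]. simpl in H2. split; auto; lia.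
Qed.

Lemma init_formula G a t e : formula_at (init_tree G) a (t, e) -> t = L0 /\ exists A, e = embed A /\ In A G.
Proof.
  intros [st H]. unfold init_tree in H. destruct (forallb _ a); [|discriminate].
  destruct (nth_error G (length a)) eqn:E; [|discriminate]. injection H as E1 E2 E3; subst.
  split; auto. eexists; split; eauto. eapply nth_error_In; eauto.
Qed.

Lemma elabs_embed A u : ~ elabs (embed A) u.
Proof. induction A; simpl; tauto. Qed.

Lemma forallb_repeat k : forallb (fun x => Nat.eqb x 0) (repeat 0 k) = true.
Proof. induction k; simpl; auto. Qed.

Lemma init_inv M V G x : G <> [] -> (forall A, In A G -> forces M V x A) ->
  Inv M V (init_tree G) (repeat 0 (pred (length G))) (fun _ => x).
Proof.
  intros HG Hf. assert (Hlen : length G > 0) by (destruct G; simpl; [congruence|lia]).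
  assert (Hlab : forall l t, lab (init_tree G) l t -> t = L0).
  { intros l t [a [e [_ Ha]]]. apply (init_formula _ _ _ _ Ha). }
  split; [split|split; [|split]].
  - apply init_def. rewrite forallb_repeat, repeat_length. split; auto; lia.
  - unfold init_tree. destruct (forallb _ _); auto.
    rewrite length_app, repeat_length. simpl.
    replace (pred (length G) + 1) with (length G) by lia. rewrite (proj2 (nth_error_None _ _)); auto.
  - intros a t e _ Ha. destruct (init_formula _ _ _ _ Ha) as [-> [A [-> HA]]].
    apply ef_embed; auto.
  - intros a t e _ Ha u Hu. destruct (init_formula _ _ _ _ Ha) as [-> [A [-> HA]]].
    exfalso; eapply elabs_embed; eauto.
  - intros t Ht. rewrite (Hlab _ _ Ht). exact I.
Qed.

Lemma step_pres C T T' : step C T T' -> Hpres_def T T'.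
Proof.
  intros [[_ Heq]|[n [s [A [fr [Hch [Hn [Hlev [Hpres [Hnew Hnone]]]]]]]]]] a fm st H.
  - rewrite Heq; eauto.
  - destruct (Hpres a fm st H) as [st' [H' _]]; eauto.
Qed.

Lemma step_PCJ C T T' : step C T T' -> PC T -> JJ T -> PC T' /\ JJ T'.
Proof.
  intros Hs HPC HJ. pose proof (step_pres _ _ _ Hs) as Hp.
  destruct Hs as [[_ Heq]|[n [s [A [fr [Hch [Hn [Hlev [Hpres [Hnew Hnone]]]]]]]]]].
  - assert (T' = T) by (apply functional_extensionality; auto). subst; auto.
  - apply (pcj_pres T T' (processed T n A) fr); auto. intros l [H _]; exact H.
Qed.

Lemma inv_step M V C T T' l f : frame_sat_C M C -> PC T -> JJ T -> step C T T' -> Inv M V T l f ->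
  exists l' f', Inv M V T' l' f' /\ prefix l l'.
Proof.
  intros Hsat HPC HJ Hs HI. pose proof (step_pres _ _ _ Hs) as Hp.
  destruct Hs as [[_ Heq]|[n [s [A [fr [Hch [Hn [Hlev [Hpres [Hnew Hnone]]]]]]]]]].
  - assert (T' = T) by (apply functional_extensionality; auto). subst. exists l, f; split; auto; apply prefix_refl.
  - assert (Hleaf : forall l, processed T n A l -> leaf T l) by (intros ? [H _]; exact H).
    destruct (classic (processed T n A l)) as [Hpr|Hpr].
    + pose proof HI as [HL [Htr [Hlo HBF]]]. pose proof Hpr as [_ [Hnl _]].
      assert (Hfa : formula_at T n (s, A)) by (exists Awake; auto).
      apply (processed_case M V C T T' l f s A (fr l)); auto.
      * intros r Hr. apply Hnew; auto.
      * exists n, A; auto.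
      * intros u Hu. eapply Hlo; eauto.
      * eapply Htr; eauto.
    + exists l, f. split; [|apply prefix_refl].
      assert (Hl := np_leaf T T' (processed T n A) l HJ (proj1 HI) Hpr Hleaf Hp Hnone).
      pose proof (finish M V T T' l [] f f (fun _ => False) HPC HI Hp) as H.
      rewrite app_nil_r in H. apply H; auto.
      * intros r1 r2 E N1. destruct r1; [congruence|discriminate].
      * intros t [].
Qed.

Theorem mainTheorem3 (X : formula -> Prop) (C : horn -> Prop)
  (G : list formula) (T : nat -> tree) :
  is_Horn X C ->
  systematic_tableau C G T ->
  tableau_closes T ->
  ~ (exists (M : ILframe) (V : nat -> W M -> Prop) (x : W M),
       frame_sat_C M C /\ forall A, In A G -> forces M V x A).
Proof.
  intros _ [H0 Hst] Hcl [M [V [x [Hsat HG]]]].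
  destruct (classic (G = [])) as [->|HGne].
  - assert (Hn : forall i a, T i a = None).
    { induction i; intro a.
      - rewrite H0. unfold init_tree. destruct (forallb _ a); auto. destruct (length a); auto.
      - destruct (Hst i) as [[_ Heq]|[n [s [A [fr [[[fm Haw] _] _]]]]]].
        + rewrite Heq; auto.
        + rewrite IHi in Haw; discriminate. }
    destruct (Hcl (fun _ => False)) as [a [b [s [e [[] _]]]]].
    repeat split; try (intros; contradiction).
    intros a [i [y Hy]] _. rewrite Hn in Hy; discriminate.
  - assert (PCJ : forall i, PC (T i) /\ JJ (T i)).
    { induction i. rewrite H0; split; [apply init_PC|apply init_JJ].
      destruct IHi; apply (step_PCJ C (T i)); auto. }
    assert (Hpers : forall i j, i <= j -> forall a fm st, T i a = Some (fm, st) ->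
                       exists st', T j a = Some (fm, st')).
    { intros i j Hij. induction Hij; eauto. intros a fm st H.
      destruct (IHHij a fm st H) as [st' H']. apply (step_pres C _ _ (Hst m) _ _ _ H'). }
    destruct (dep_seq (fun i p => Inv M V (T i) (fst p) (snd p))
                      (fun p q => prefix (fst p) (fst q))) as [sq [HI Hm]].
    { exists (repeat 0 (pred (length G)), fun _ => x). simpl. rewrite H0. apply init_inv; auto. }
    { intros i [l f] H. simpl in H. destruct (PCJ i) as [HP HJ].
      destruct (inv_step M V C (T i) (T (S i)) l f Hsat HP HJ (Hst i) H) as [l' [f' [H1 H2]]].
      exists (l', f'); auto. }
    assert (Hmon : forall i j, i <= j -> prefix (fst (sq i)) (fst (sq j))).
    { intros i j Hij; induction Hij; [apply prefix_refl|eapply prefix_trans; eauto]. }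
    set (P := fun a => exists i, prefix a (fst (sq i))).
    assert (HU : union_branch T P).
    { split; [|split; [|split]].
      - intros a [i [c Hc]]. exists i. destruct (HI i) as [[Hd _] _].
        apply (proj1 (PCJ i) a c). rewrite <- Hc; auto.
      - intros a b [i Hb] Hab. exists i; eapply prefix_trans; eauto.
      - intros a b [i Ha] [j Hb]. apply prefix_comp with (fst (sq (max i j))).
        + eapply prefix_trans; [exact Ha|apply Hmon; lia].
        + eapply prefix_trans; [exact Hb|apply Hmon; lia].
      - intros a [j Hd] Hc. apply NNPP; intro Na.
        destruct (Hc (fst (sq j)) (ex_intro _ j (prefix_refl _))) as [H|[c Ec]].
        + apply Na; exists j; auto.
        + destruct c as [|y c].
          * apply Na; exists j. rewrite Ec, app_nil_r; apply prefix_refl.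
          * destruct (HI j) as [[_ Hnone] _].
            destruct (proj2 (PCJ j) (fst (sq j)) (y::c)) as [z Hz]; [discriminate|rewrite <- Ec; auto|].
            congruence. }
    destruct (Hcl P HU) as [a [b [s [e [[i1 Ha] [[i2 Hb] [[k1 [st1 Hf1]] [k2 [st2 Hf2]]]]]]]]].
    set (K := max (max i1 i2) (max k1 k2)).
    destruct (Hpers k1 K ltac:(lia) _ _ _ Hf1) as [st1' Hf1'].
    destruct (Hpers k2 K ltac:(lia) _ _ _ Hf2) as [st2' Hf2'].
    destruct (HI K) as [_ [Htr _]].
    assert (HaK : prefix a (fst (sq K))) by (eapply prefix_trans; [exact Ha|apply Hmon; lia]).
    assert (HbK : prefix b (fst (sq K))) by (eapply prefix_trans; [exact Hb|apply Hmon; lia]).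
    pose proof (Htr a s e HaK (ex_intro _ _ Hf1')) as E1.
    pose proof (Htr b s (ENeg e) HbK (ex_intro _ _ Hf2')) as E2.
    simpl in E2. contradiction.
Qed.
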